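(* Let $p>0$, let $n$ be a positive integer and let $0<a_n\leq\dots\leq a_1$ be reals with $\sum_{i=1}^n a_i^p=1$. Then for all $0\leq m\leq n$ and $q\geq p$, $$\left(\sum_{i=m+1}^n a_i^q\right)^{1/q}\leq\frac{(p/q)^{1/q}(1-p/q)^{1/p-1/q}}{m^{1/p-1/q}}.$$ In particular, for every $\varepsilon>0$ there exists $C=C(\varepsilon)$ such that for all $q\geq p+\varepsilon$, $$\left(\sum_{i=m+1}^n a_i^q\right)^{1/q}\leq\frac{C}{m^{1/p-1/q}}.$$ *)

(* Defs.v *)
From HB Require Import structures.
From mathcomp Require Import all_boot all_order all_algebra.
From mathcomp Require Import all_classical all_reals all_analysis.
Set Implicit Arguments. Unset Strict Implicit. Unset Printing Implicit Defensive.
Import Order.TTheory GRing.Theory Num.Theory.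
Local Open Scope ring_scope.

Definition admissible {R : realType} (p : R) (n : nat) (a : nat -> R) : Prop :=
  (0 < n)%N /\
  (forall i, (1 <= i <= n)%N -> 0 < a i) /\
  (forall i j, (1 <= i)%N -> (i <= j)%N -> (j <= n)%N -> a j <= a i) /\
  \sum_(1 <= i < n.+1) (a i) `^ p = 1.

Definition tail_norm {R : realType} (q : R) (n m : nat) (a : nat -> R) : R :=
  (\sum_(m.+1 <= i < n.+1) (a i) `^ q) `^ q^-1.

(* Main.v *)
Require Import Defs.
From HB Require Import structures.
From mathcomp Require Import all_boot all_order all_algebra.
From mathcomp Require Import all_classical all_reals all_analysis.
From mathcomp Require Import ring lra zify.
Import Order.TTheory GRing.Theory Num.Theory.
Local Open Scope ring_scope.

Lemma ln_le_sub1 {R : realType} (x : R) : 0 < x -> ln x <= x - 1.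
Proof.
move=> x0; have := @le_ln1Dx R (x - 1).
rewrite addrCA subrr addr0; apply; lra.
Qed.

Lemma key {R : realType} (T al r : R) : 0 <= T <= 1 -> 0 < r -> 0 < al ->
  al * (1 + r) = 1 -> T * (1 - T) `^ r <= al * (1 - al) `^ r.
Proof.
move=> /andP[T0 T1] r0 al0 hal.
have al1 : 0 < 1 - al by nra.
have Rge0 : 0 <= al * (1 - al) `^ r by rewrite mulr_ge0 ?powR_ge0 // ltW.
case: (eqVneq T 0) => [->|Tn0]; first by rewrite mul0r.
case: (eqVneq T 1) => [->|Tn1]; first by rewrite subrr powR0 ?mulr0 // gt_eqF.
have Tp : 0 < T by rewrite lt_neqAle eq_sym Tn0.
have Tl : 0 < 1 - T by rewrite subr_gt0 lt_neqAle Tn1.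
rewrite -ler_ln ?posrE ?mulr_gt0 ?powR_gt0 //.
rewrite !lnM ?posrE ?powR_gt0 // !ln_powR.
have hu := @ln_le_sub1 _ _ (divr_gt0 Tp al0).
have hv := @ln_le_sub1 _ _ (divr_gt0 Tl al1).
rewrite ln_div ?posrE // in hu.
rewrite ln_div ?posrE // in hv.
have ialr : 1 + r = al^-1.
  by rewrite -[al^-1]mulr1; apply: (canRL (mulKf _)); rewrite ?gt_eqF.
have e1 : T / al - 1 = T * (1 + r) - 1 by rewrite ialr.
have e2 : r * ((1 - T) / (1 - al) - 1) = (1 - T) * (1 + r) - r.
  have -> : 1 - al = r * al by nra.
  rewrite ialr; field; rewrite ?gt_eqF //.
have hv' : r * (ln (1 - T) - ln (1 - al)) <= (1 - T) * (1 + r) - r.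
  by rewrite -e2 ler_wpM2l // ltW.
rewrite e1 in hu.
have : r * (ln (1 - T) - ln (1 - al)) = r * ln (1 - T) - r * ln (1 - al) by rewrite mulrBr.
lra.
Qed.

Lemma main_case {R : realType} (p q : R) n a m : 0 < p -> p < q ->
  admissible p n a -> (0 < m)%N -> (m <= n)%N ->
  tail_norm q n m a <=
        (p / q) `^ q^-1 * (1 - p / q) `^ (p^-1 - q^-1)
          / (m%:R `^ (p^-1 - q^-1)).
Proof.
move=> p0 pq [n0 [apos [amon hsum]]] m0 mn.
have q0 : 0 < q by apply: lt_trans pq.
set A := a m.
have A0 : 0 < A by apply: apos; rewrite m0 mn.
set T := \sum_(m.+1 <= i < n.+1) a i `^ p.
set H := \sum_(1 <= i < m.+1) a i `^ p.
have HT : H + T = 1 by rewrite -hsum /H /T -big_cat_nat.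
have T0 : 0 <= T by apply: sumr_ge0 => i _; apply: powR_ge0.
have H0 : 0 <= H by apply: sumr_ge0 => i _; apply: powR_ge0.
have m0R : 0 < m%:R :> R by rewrite ltr0n.
have HA : m%:R * A `^ p <= H.
  rewrite mulr_natl.
  have -> : A `^ p *+ m = \sum_(1 <= i < m.+1) A `^ p by rewrite sumr_const_nat subSS subn0.
  apply: ler_sum_nat => i /andP[i1 im].
  have ai0 : 0 < a i by apply: apos; lia.
  apply: ge0_ler_powR; rewrite ?nnegrE; try exact: ltW.
  by apply: amon => //; lia.
set r := q / p - 1.
have r0 : 0 < r by rewrite /r subr_gt0 ltr_pdivlMr // mul1r.
have hpr : p * r = q - p by rewrite /r; field; rewrite gt_eqF.
have s_le : \sum_(m.+1 <= i < n.+1) a i `^ q <= T * A `^ (q - p).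
  rewrite /T mulr_suml; apply: ler_sum_nat => i /andP[i1 i2].
  have ai0 : 0 < a i by apply: apos; lia.
  rewrite [X in a i `^ X](_ : q = p + (q - p)); last by ring.
  rewrite powRD; last by rewrite (gt_eqF ai0) implybT.
  apply: ler_wpM2l; first exact: powR_ge0.
  apply: ge0_ler_powR; rewrite ?nnegrE; try exact: ltW; first by rewrite subr_ge0 ltW.
  by apply: amon => //; lia.
have Ale : A `^ (q - p) <= ((1 - T) / m%:R) `^ r.
  rewrite -hpr powRrM; apply: (ge0_ler_powR (ltW r0)).
  - by rewrite nnegrE powR_ge0.
  - by rewrite nnegrE divr_ge0 ?ler0n //; lra.
  - rewrite ler_pdivlMr //; lra.
have spl : ((1 - T) / m%:R) `^ r = (1 - T) `^ r / m%:R `^ r.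
  rewrite powRM ?invr_ge0 ?ler0n //; last lra.
  by rewrite -powR_inv1 ?ler0n // -powRrM mulN1r powRN.
set al := p / q.
have hal : al * (1 + r) = 1 by rewrite /al /r; field; rewrite ?gt_eqF.
have al0 : 0 < al by rewrite divr_gt0.
have key1 := @key _ T al r.
have T1 : T <= 1 by lra.
have kk : T * (1 - T) `^ r <= al * (1 - al) `^ r by apply: key1; rewrite ?T0.
have al1 : 0 <= 1 - al by nra.
have mr0 : 0 < m%:R `^ r by rewrite powR_gt0.
have sfin : \sum_(m.+1 <= i < n.+1) a i `^ q <= al * (1 - al) `^ r / m%:R `^ r.
  apply: (le_trans s_le); apply: (le_trans (ler_wpM2l T0 Ale)).
  rewrite spl mulrA; apply: ler_wpM2r => //; rewrite invr_ge0 ltW //.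
rewrite /tail_norm; apply: (le_trans (ge0_ler_powR _ _ _ sfin)).
- by rewrite invr_ge0 ltW.
- by rewrite nnegrE sumr_ge0 // => i _; rewrite powR_ge0.
- rewrite nnegrE; apply: mulr_ge0; last by rewrite invr_ge0 ltW.
  by apply: mulr_ge0; [exact: ltW | exact: powR_ge0].
rewrite powRM; first last.
- by rewrite invr_ge0 ltW.
- by apply: mulr_ge0; [exact: ltW | exact: powR_ge0].
rewrite powRM; [|exact: ltW|exact: powR_ge0].
rewrite -powRrM -powRN -powRrM.
have e : r * q^-1 = p^-1 - q^-1 by rewrite /r; field; rewrite ?gt_eqF.
by rewrite e mulNr e powRN.
Qed.

Theorem lemma7p4 (R : realType) (p : R) (hp : 0 < p) :
  (forall (n : nat) (a : nat -> R) (m : nat) (q : R),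
      admissible p n a -> (m <= n)%N -> p <= q ->
      ((0 < m)%N \/ q = p) ->
      tail_norm q n m a <=
        (p / q) `^ q^-1 * (1 - p / q) `^ (p^-1 - q^-1)
          / (m%:R `^ (p^-1 - q^-1)))
  /\
  (forall eps : R, 0 < eps ->
     exists C : R, forall (n : nat) (a : nat -> R) (m : nat) (q : R),
       admissible p n a -> (1 <= m <= n)%N -> p + eps <= q ->
       tail_norm q n m a <= C / (m%:R `^ (p^-1 - q^-1))).
Proof.
split.
  move=> n a m q adm mn; rewrite le_eqVlt => /predU1P[<- _|pq hm].
    rewrite divff ?gt_eqF // !subrr !powRr0 powR1 mul1r invr1 mulr1.
    have <- : 1 `^ p^-1 = 1 :> R by rewrite powR1.
    case: adm => [n0 [apos [amon hsum]]].
    rewrite /tail_norm; apply: (ge0_ler_powR (ltW _)); first by rewrite invr_gt0.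
    - by rewrite nnegrE sumr_ge0 // => i _; rewrite powR_ge0.
    - by rewrite nnegrE.
    rewrite -hsum [X in _ <= X](@big_cat_nat _ _ _ m.+1) ?ltnS //=.
    rewrite lerDr; apply: sumr_ge0 => i _; exact: powR_ge0.
  have m0 : (0 < m)%N by case: hm => // qp; move: pq; rewrite qp ltxx.
  exact: main_case.
move=> eps eps0; exists 1 => n a m q adm /andP[m1 mn] hq.
have pq : p < q by apply: (lt_le_trans _ hq); rewrite ltrDl.
have q0 : 0 < q by apply: lt_trans pq.
apply: (le_trans (@main_case _ p q n a m hp pq adm m1 mn)).
apply: ler_wpM2r; first by rewrite invr_ge0 powR_ge0.
have al1 : p / q <= 1 by rewrite ler_pdivrMr // mul1r ltW.
have al0 : 0 <= p / q by rewrite divr_ge0 // ltW.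
apply: mulr_ile1; try exact: powR_ge0.
- have <- : 1 `^ q^-1 = 1 :> R by rewrite powR1.
  have qi : 0 <= q^-1 by rewrite invr_ge0 ltW.
  by apply: (ge0_ler_powR qi) => //; rewrite nnegrE.
- apply: (@le_trans _ _ (1 `^ (p^-1 - q^-1))); last by rewrite powR1.
  have e : 0 <= p^-1 - q^-1 by rewrite subr_ge0 lef_pV2 ?posrE ?ltW.
  apply: (ge0_ler_powR e); rewrite ?nnegrE; lra.
Qed.
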